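(* Let $\mu$ be the distribution constructed below. Then $\mu\in\mathcal{L}_{loc}$, i.e. for every $c>0$ and every $a\in\mathbb{R}$, $\mu((x,x+c])>0$ for all large $x$ and $\mu((x+a,x+a+c])\sim\mu((x,x+c])$.
   Context: $f(x)\sim g(x)$ means $\lim_{x\to\infty}f(x)/g(x)=1$. The class $\mathcal{L}_{loc}$ consists of distributions $\rho$ on $\mathbb{R}$ such that for every $c>0$, $\rho((x,x+c])>0$ for all sufficiently large $x$ and $\rho((x+a,x+a+c])\sim\rho((x,x+c])$ for every $a\in\mathbb{R}$. Construction: fix $1<x_0<b$ and $\delta\in(0,1)$ with $\delta<\min(x_0-1,\,b-x_0)$. Let $h$ be a continuous periodic function on $\mathbb{R}$ with period $\log b$ such that $h(\log x)>0$ for $x\in[1,x_0)\cup(x_0,b]$, $h(\log x_0)=0$, and $h(\log x)=-1/\log|x-x_0|$ for $0<|x-x_0|<\delta$. For $\alpha>0$ let $\phi(x):=x^{-\alpha-1}h(\log x)\mathbf{1}_{[1,\infty)}(x)$, $M:=\int_1^\infty x^{-1-\alpha}h(\log x)\,dx$, and $\mu(dx):=M^{-1}\phi(x)\,dx$. *)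

(* Defs.v *)
From Stdlib Require Import Reals Lra ClassicalEpsilon.
Open Scope R_scope.

(* Riemann integral of f over [a,b] (a <= b), defined as RiemannInt when f is
   Riemann integrable there, and 0 otherwise (the value does not depend on the
   integrability proof, by RiemannInt_P5). *)
Definition integral (f : R -> R) (a b : R) : R :=
  match excluded_middle_informative (inhabited (Riemann_integrable f a b)) with
  | left H =>
      let pr := proj1_sig (constructive_indefinite_description
                  (fun _ : Riemann_integrable f a b => True)
                  (match H with inhabits p => ex_intro _ p I end)) in
      RiemannInt pr
  | right _ => 0
  end.

Definition asym_equiv (f g : R -> R) : Prop :=
  forall eps, eps > 0 -> exists X, forall x, X <= x -> Rabs (f x / g x - 1) < eps.

(* A distribution rho on R is represented through its interval masses:
   m u v = rho((u, v]).  Class L_loc: *)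
Definition L_loc (m : R -> R -> R) : Prop :=
  forall c, c > 0 ->
    (exists X, forall x, X <= x -> m x (x + c) > 0) /\
    (forall a, asym_equiv (fun x => m (x + a) (x + a + c)) (fun x => m x (x + c))).

Definition phi (alpha : R) (h : R -> R) (x : R) : R :=
  if Rle_dec 1 x then Rpower x (- alpha - 1) * h (ln x) else 0.

Definition mu_interval (alpha M : R) (h : R -> R) (u v : R) : R :=
  / M * integral (phi alpha h) u v.

(* Main.v *)
Require Import Defs.
From Stdlib Require Import Reals Lra ClassicalEpsilon ZArith.
From Coquelicot Require Import Coquelicot.
Open Scope R_scope.

Lemma integral_RInt f a b : ex_RInt f a b -> integral f a b = RInt f a b.
Proof.
  intros H. unfold integral.
  destruct (excluded_middle_informative _) as [Hi|Hn].
  - simpl. destruct (constructive_indefinite_description _ _) as [pr ?]. simpl.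
    symmetry; apply RInt_Reals.
  - exfalso; apply Hn; constructor; now apply ex_RInt_Reals_0.
Qed.

Lemma cont_h_C (h : R -> R) : continuity h -> forall t, continuous h t.
Proof. intros Hc t. apply continuity_pt_filterlim, Hc. Qed.

Lemma phi_cont alpha h : continuity h -> forall t, 1 < t -> continuous (phi alpha h) t.
Proof.
  intros Hc t Ht.
  apply continuous_ext_loc with (fun x => exp ((- alpha - 1) * ln x) * h (ln x)).
  - assert (Hpos : 0 < t - 1) by lra.
    exists (mkposreal _ Hpos). intros y Hy. cbv [ball] in Hy; simpl in Hy.
    unfold AbsRing_ball, abs, minus, plus, opp in Hy; simpl in Hy.
    unfold phi. destruct (Rle_dec 1 y) as [_|Hn].
    + reflexivity.
    + exfalso. apply Hn. apply Rabs_lt_between in Hy. lra.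
  - apply (continuous_mult (K:=R_AbsRing)).
    + apply continuous_exp_comp.
      apply (continuous_mult (K:=R_AbsRing) (fun _ => - alpha - 1) ln).
      * apply continuous_const.
      * apply continuous_ln; lra.
    + apply continuous_comp. apply continuous_ln; lra. apply cont_h_C; auto.
Qed.

Lemma phi_exRInt alpha h : continuity h -> forall u v, 1 < u -> u <= v -> ex_RInt (phi alpha h) u v.
Proof.
  intros Hc u v Hu Huv. apply (ex_RInt_continuous (V:=R_CompleteNormedModule)). intros z Hz.
  apply phi_cont; auto. rewrite Rmin_left in Hz; lra.
Qed.

Lemma int_bounds f u v e th U D :
  u <= v -> 0 <= D -> 0 <= th ->
  (forall t, u <= t <= v -> continuous f t) ->
  (forall t, u <= t <= v -> 0 <= f t <= U) ->
  (forall t, u <= t <= v -> th <= Rabs (t - e) -> D <= f t) ->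
  D * (v - u - 2 * th) <= integral f u v <= U * (v - u).
Proof.
  intros Huv HD Hth Hc Hb Hl.
  assert (Hex : forall a b, u <= a -> a <= b -> b <= v -> ex_RInt f a b).
  { intros a b H1 H2 H3. apply (ex_RInt_continuous (V:=R_CompleteNormedModule)). intros z Hz.
    rewrite Rmin_left in Hz by lra. rewrite Rmax_right in Hz by lra. apply Hc; lra. }
  rewrite integral_RInt by (apply Hex; lra).
  split.
  - set (p := Rmax u (Rmin v (e - th))).
    set (q := Rmax p (Rmin v (e + th))).
    assert (Hp : u <= p <= v) by (unfold p; unfold Rmax, Rmin; repeat destruct Rle_dec; lra).
    assert (Hq : p <= q <= v) by (unfold q; unfold Rmax, Rmin; repeat destruct Rle_dec; lra).
    assert (Hqp : q - p <= 2 * th) by (unfold q, p; unfold Rmax, Rmin; repeat destruct Rle_dec; lra).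
    rewrite <- (RInt_Chasles f u p v) by (apply Hex; lra).
    rewrite <- (RInt_Chasles f p q v) by (apply Hex; lra).
    unfold plus; simpl.
    assert (I1 : D * (p - u) <= RInt f u p).
    { replace (D * (p - u)) with (RInt (fun _ => D) u p)
        by (rewrite RInt_const; unfold scal; simpl; unfold mult; simpl; ring).
      apply RInt_le; try lra. apply ex_RInt_const. apply Hex; lra.
      intros t Ht. apply Hl. lra.
      assert (t <= e - th) by (unfold p in Ht; unfold Rmax, Rmin in Ht; repeat destruct Rle_dec; lra).
      rewrite Rabs_left1; lra. }
    assert (I2 : 0 <= RInt f p q).
    { replace 0 with (RInt (fun _ => 0) p q)
        by (rewrite RInt_const; unfold scal; simpl; unfold mult; simpl; ring).
      apply RInt_le; try lra. apply ex_RInt_const. apply Hex; lra.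
      intros t Ht. apply Hb; lra. }
    assert (I3 : D * (v - q) <= RInt f q v).
    { replace (D * (v - q)) with (RInt (fun _ => D) q v)
        by (rewrite RInt_const; unfold scal; simpl; unfold mult; simpl; ring).
      apply RInt_le; try lra. apply ex_RInt_const. apply Hex; lra.
      intros t Ht. apply Hl. lra.
      assert (e + th <= t) by (unfold q, p in Ht; unfold Rmax, Rmin in Ht; repeat destruct Rle_dec; lra).
      rewrite Rabs_right; lra. }
    nra.
  - replace (U * (v - u)) with (RInt (fun _ => U) u v)
        by (rewrite RInt_const; unfold scal; simpl; unfold mult; simpl; ring).
    apply RInt_le; try lra. apply Hex; lra. apply ex_RInt_const.
    intros t Ht. apply Hb; lra.
Qed.

Lemma hper_Z (h : R -> R) p (Hper : forall t, h (t + p) = h t) :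
  forall n t, h (t + IZR n * p) = h t.
Proof.
  assert (HN : forall k t, h (t + INR k * p) = h t).
  { induction k; intros t. simpl. f_equal; ring.
    rewrite S_INR. replace (t + (INR k + 1) * p) with ((t + INR k * p) + p) by ring.
    rewrite Hper. apply IHk. }
  intros n t. destruct n as [|q|q].
  - simpl. f_equal; ring.
  - rewrite <- positive_nat_Z, <- INR_IZR_INZ. apply HN.
  - replace (IZR (Z.neg q)) with (- INR (Pos.to_nat q)) by (rewrite IZR_NEG, <- positive_nat_Z, <- INR_IZR_INZ; reflexivity).
    rewrite <- (HN (Pos.to_nat q) (t + - INR (Pos.to_nat q) * p)). f_equal; ring.
Qed.

Lemma reduce p : 0 < p -> forall t, exists n : Z, 0 <= t - IZR n * p <= p.
Proof.
  intros Hp t. destruct (archimed (t / p)) as [H1 H2].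
  exists (up (t / p) - 1)%Z. rewrite minus_IZR.
  assert (E : t = (t / p) * p) by (field; lra).
  split.
  - rewrite E at 1. assert (IZR (up (t/p)) - 1 <= t / p) by lra. nra.
  - rewrite E at 1. nra.
Qed.

Lemma exp_ln_range b s : 1 < b -> 0 <= s <= ln b -> 1 <= exp s <= b.
Proof.
  intros Hb Hs. split.
  - rewrite <- exp_0. destruct (Req_dec s 0) as [->|Hn]; [lra|].
    left; apply exp_increasing; lra.
  - rewrite <- (exp_ln b) by lra. destruct (Req_dec s (ln b)) as [->|Hn]; [lra|].
    left; apply exp_increasing; lra.
Qed.

Lemma h_nonneg (h : R -> R) x0 b (Hx0 : 1 < x0) (Hb : x0 < b)
  (Hper : forall t, h (t + ln b) = h t)
  (Hpos : forall x, 1 <= x <= b -> x <> x0 -> h (ln x) > 0)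
  (Hzero : h (ln x0) = 0) : forall t, 0 <= h t.
Proof.
  intros t. assert (Hp : 0 < ln b) by (rewrite <- ln_1; apply ln_increasing; lra).
  destruct (reduce _ Hp t) as [n Hn].
  replace t with ((t - IZR n * ln b) + IZR n * ln b) by ring.
  rewrite hper_Z by exact Hper.
  set (s := t - IZR n * ln b) in *.
  rewrite <- (ln_exp s). assert (Hr := exp_ln_range b s ltac:(lra) Hn).
  destruct (Req_dec (exp s) x0) as [E|E].
  - rewrite E, Hzero; lra.
  - left; apply Hpos; auto.
Qed.

Lemma h_unif (h : R -> R) p (Hp : 0 < p) (Hcont : continuity h)
  (Hper : forall t, h (t + p) = h t) :
  forall eps, 0 < eps -> exists d, 0 < d /\ forall t t', Rabs (t - t') < d -> Rabs (h t - h t') < eps.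
Proof.
  intros eps He.
  destruct (Heine h (fun c => - p <= c <= 2 * p) (compact_P3 _ _) (fun x _ => Hcont x)
     (mkposreal _ He)) as [d1 Hd1].
  exists (Rmin d1 p). split. { apply Rmin_pos; [apply cond_pos|lra]. }
  intros t t' Htt.
  destruct (reduce _ Hp t) as [n Hn].
  replace t with ((t - IZR n * p) + IZR n * p) by ring.
  replace t' with ((t' - IZR n * p) + IZR n * p) by ring.
  rewrite !hper_Z by exact Hper.
  assert (H1 := Rmin_l d1 p). assert (H2 := Rmin_r d1 p).
  assert (Hs : Rabs ((t - IZR n * p) - (t' - IZR n * p)) < Rmin d1 p)
    by (replace ((t - IZR n * p) - (t' - IZR n * p)) with (t - t') by ring; auto).
  apply Rabs_lt_between in Hs.
  apply Hd1; simpl; try lra.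
  apply Rabs_lt_between; lra.
Qed.

Lemma psi_cont (h : R -> R) (Hcont : continuity h) y : 0 < y -> continuity_pt (fun y => h (ln y)) y.
Proof.
  intros Hy. apply continuity_pt_filterlim.
  apply (continuous_comp ln h). apply continuous_ln; auto. apply cont_h_C; auto.
Qed.

Lemma h_min (h : R -> R) x0 b delta (Hx0 : 1 < x0) (Hb : x0 < b)
  (Hdelta0 : 0 < delta) (Hdelta2 : delta < x0 - 1) (Hdelta3 : delta < b - x0)
  (Hcont : continuity h)
  (Hper : forall t, h (t + ln b) = h t)
  (Hpos : forall x, 1 <= x <= b -> x <> x0 -> h (ln x) > 0) :
  exists m, 0 < m /\ forall t, m <= h t \/
     exists n : Z, Rabs (exp (t - IZR n * ln b) - x0) < delta / 2.
Proof.
  assert (Hp : 0 < ln b) by (rewrite <- ln_1; apply ln_increasing; lra).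
  destruct (continuity_ab_min (fun y => h (ln y)) 1 (x0 - delta / 2)) as [m1 [Hm1 Hr1]].
  { lra. } { intros c Hc. apply psi_cont; auto; lra. }
  destruct (continuity_ab_min (fun y => h (ln y)) (x0 + delta / 2) b) as [m2 [Hm2 Hr2]].
  { lra. } { intros c Hc. apply psi_cont; auto; lra. }
  assert (P1 : h (ln m1) > 0) by (apply Hpos; lra).
  assert (P2 : h (ln m2) > 0) by (apply Hpos; lra).
  exists (Rmin (h (ln m1)) (h (ln m2))). split. { apply Rmin_pos; lra. }
  intros t. destruct (reduce _ Hp t) as [n Hn].
  set (s := t - IZR n * ln b) in *.
  assert (Hr := exp_ln_range b s ltac:(lra) Hn).
  destruct (Rlt_dec (Rabs (exp s - x0)) (delta / 2)) as [Hl|Hl].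
  - right. exists n. exact Hl.
  - left. replace t with (s + IZR n * ln b) by (unfold s; ring).
    rewrite hper_Z by exact Hper. rewrite <- (ln_exp s).
    destruct (Rle_dec (exp s) x0) as [Hle|Hle].
    + rewrite Rabs_left1 in Hl by lra.
      assert (Hmm := Hm1 (exp s) ltac:(lra)). simpl in Hmm.
      assert (Hq := Rmin_l (h (ln m1)) (h (ln m2))). lra.
    + rewrite Rabs_right in Hl by lra.
      assert (Hmm := Hm2 (exp s) ltac:(lra)). simpl in Hmm.
      assert (Hq := Rmin_r (h (ln m1)) (h (ln m2))). lra.
Qed.

Lemma h_near (h : R -> R) x0 b delta (Hx0 : 1 < x0) (Hb : x0 < b)
  (Hper : forall t, h (t + ln b) = h t)
  (Hloc : forall x, 0 < Rabs (x - x0) < delta -> h (ln x) = - / ln (Rabs (x - x0))) :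
  forall (n : Z) t, 0 < t -> Rabs (t / exp (IZR n * ln b) - x0) < delta ->
    t <> x0 * exp (IZR n * ln b) ->
    h (ln t) = / (IZR n * ln b - ln (Rabs (t - x0 * exp (IZR n * ln b)))).
Proof.
  intros n t Ht Hd Hne. set (B := exp (IZR n * ln b)) in *.
  assert (HB : 0 < B) by apply exp_pos.
  assert (E1 : ln t = ln (t / B) + IZR n * ln b).
  { rewrite ln_div by auto. unfold B; rewrite ln_exp; ring. }
  rewrite E1, hper_Z by exact Hper.
  assert (E2 : t / B - x0 = (t - x0 * B) / B) by (field; lra).
  assert (Hu : 0 < Rabs (t - x0 * B)) by (apply Rabs_pos_lt; lra).
  rewrite Hloc.
  - rewrite E2, Rabs_div, (Rabs_right B) by lra. rewrite ln_div by lra.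
    unfold B at 2; rewrite ln_exp.
    replace (IZR n * ln b - ln (Rabs (t - x0 * B))) with (- (ln (Rabs (t - x0 * B)) - IZR n * ln b)) by ring.
    rewrite Rinv_opp. reflexivity.
  - split; auto. rewrite E2, Rabs_div, (Rabs_right B) by lra.
    apply Rdiv_lt_0_compat; lra.
Qed.

Lemma inv_le1 D K c : 0 < D -> 0 < K -> K <= c * D -> / D <= c * / K.
Proof.
  intros HD HK H. assert (0 < / D) by (apply Rinv_0_lt_compat; auto).
  assert (0 < / K) by (apply Rinv_0_lt_compat; auto).
  assert (D * / D = 1) by (field; lra). assert (K * / K = 1) by (field; lra).
  nra.
Qed.

Lemma inv_le2 D K c : 0 < D -> 0 < K -> c * D <= K -> c * / K <= / D.
Proof.
  intros HD HK H. assert (0 < / D) by (apply Rinv_0_lt_compat; auto).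
  assert (0 < / K) by (apply Rinv_0_lt_compat; auto).
  assert (D * / D = 1) by (field; lra). assert (K * / K = 1) by (field; lra).
  nra.
Qed.

Lemma inv_le3 D D0 l eta : 0 < l -> l <= D -> 0 < D0 -> 0 <= eta ->
  Rabs (D - D0) <= eta * l -> Rabs (/ D - / D0) <= eta * / D0.
Proof.
  intros Hl HD HD0 He H.
  replace (/ D - / D0) with ((D0 - D) * / D * / D0) by (field; lra).
  rewrite !Rabs_mult. rewrite (Rabs_right (/ D)) by (left; apply Rinv_0_lt_compat; lra).
  rewrite (Rabs_right (/ D0)) by (left; apply Rinv_0_lt_compat; lra).
  rewrite Rabs_minus_sym.
  assert (0 < / D0) by (apply Rinv_0_lt_compat; auto).
  assert (0 < / D) by (apply Rinv_0_lt_compat; lra).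
  assert (Rabs (D - D0) * / D <= eta).
  { assert (D * / D = 1) by (field; lra).
    assert (0 <= Rabs (D - D0)) by apply Rabs_pos. nra. }
  nra.
Qed.

Lemma ln_diff y z mm : 0 < mm -> mm <= y -> mm <= z -> Rabs (ln z - ln y) <= Rabs (z - y) / mm.
Proof.
  assert (K : forall y z, 0 < y -> y <= z -> ln z - ln y <= (z - y) / y).
  { intros y0 z0 Hy Hyz. rewrite <- ln_div by lra.
    assert (Hq := exp_ineq1_le (ln (z0 / y0))). rewrite exp_ln in Hq.
    replace ((z0 - y0) / y0) with (z0 / y0 - 1) by (field; lra). lra.
    apply Rdiv_lt_0_compat; lra. }
  intros Hm Hy Hz.
  destruct (Rle_dec y z) as [H|H].
  - assert (0 <= ln z - ln y).
    { destruct (Req_dec y z) as [->|]; [lra|]. left. apply Rlt_Rminus, ln_increasing; lra. }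
    rewrite Rabs_right by lra. rewrite Rabs_right by lra.
    apply Rle_trans with ((z - y) / y). apply K; lra.
    unfold Rdiv. apply Rmult_le_compat_l; [lra|]. apply Rinv_le_contravar; lra.
  - assert (0 <= ln y - ln z) by (left; apply Rlt_Rminus, ln_increasing; lra).
    rewrite Rabs_left1 by lra. rewrite Rabs_left1 by lra.
    replace (- (ln z - ln y)) with (ln y - ln z) by ring.
    apply Rle_trans with ((y - z) / z). apply K; lra.
    replace (- (z - y)) with (y - z) by ring.
    unfold Rdiv. apply Rmult_le_compat_l; [lra|]. apply Rinv_le_contravar; lra.
Qed.

Lemma ln_le x y : 0 < x -> x <= y -> ln x <= ln y.
Proof. intros Hx Hxy. destruct (Req_dec x y) as [->|]; [lra|]. left; apply ln_increasing; lra. Qed.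

Lemma exp_minus_div a c : exp (a - c) = exp a / exp c.
Proof.
  assert (H := exp_plus (a - c) c). replace (a - c + c) with a in H by ring.
  assert (0 < exp c) by apply exp_pos. rewrite H. field. lra.
Qed.

Lemma shape (x0 b delta : R) (h : R -> R)
  (Hx0 : 1 < x0) (Hb : x0 < b)
  (Hdelta0 : 0 < delta) (Hdelta1 : delta < 1)
  (Hdelta2 : delta < x0 - 1) (Hdelta3 : delta < b - x0)
  (Hcont : continuity h)
  (Hper : forall t, h (t + ln b) = h t)
  (Hpos : forall x, 1 <= x <= b -> x <> x0 -> h (ln x) > 0)
  (Hzero : h (ln x0) = 0)
  (Hloc : forall x, 0 < Rabs (x - x0) < delta -> h (ln x) = - / ln (Rabs (x - x0))) :
  forall eta L th, 0 < eta < 1 -> 0 < L -> 0 < th < 1 ->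
  exists X, forall x, X <= x -> exists A e, 0 < A /\
    forall t, Rabs (t - x) <= L ->
      h (ln t) <= A * (1 + eta) /\ (th <= Rabs (t - e) -> A * (1 - eta) <= h (ln t)).
Proof.
  intros eta L th Heta HL Hth.
  assert (Hp : 0 < ln b) by (rewrite <- ln_1; apply ln_increasing; lra).
  destruct (h_min h x0 b delta Hx0 Hb Hdelta0 Hdelta2 Hdelta3 Hcont Hper Hpos) as [m [Hm Hmin]].
  destruct (h_unif h (ln b) Hp Hcont Hper (m * eta) ltac:(nra)) as [d [Hd Hunif]].
  set (lam := - ln delta).
  assert (Hlam : 0 < lam) by (unfold lam; assert (ln delta < ln 1) by (apply ln_increasing; lra); rewrite ln_1 in *; lra).
  set (R0 := 2 * L + 2 * L / (lam * eta) + 1).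
  assert (HR1 : 0 < 2 * L / (lam * eta)) by (apply Rdiv_lt_0_compat; nra).
  assert (HR2 : 2 * L / R0 <= eta * lam).
  { apply Rmult_le_reg_r with R0. unfold R0; lra.
    unfold Rdiv. rewrite Rmult_assoc, Rinv_l by (unfold R0; lra).
    assert (E : eta * lam * (2 * L * / (lam * eta)) = 2 * L) by (field; nra).
    unfold R0. rewrite Rmult_plus_distr_l, Rmult_plus_distr_l. nra. }
  assert (HRL : 1 <= R0 + L) by (unfold R0; lra).
  assert (HlnRL : 0 <= ln (R0 + L)) by (rewrite <- ln_1; apply ln_le; lra).
  assert (Hlth : 0 < - ln th) by (assert (ln th < ln 1) by (apply ln_increasing; lra); rewrite ln_1 in *; lra).
  set (K0 := 1 + (1 + eta) * ln (R0 + L) / eta + (- ln th) / eta).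
  assert (HK1 : 0 <= (1 + eta) * ln (R0 + L) / eta) by (apply Rmult_le_pos; [nra| left; apply Rinv_0_lt_compat; lra]).
  assert (HK2 : 0 < (- ln th) / eta) by (apply Rdiv_lt_0_compat; lra).
  assert (Hd1 : 0 < 2 * L / d) by (apply Rdiv_lt_0_compat; lra).
  assert (Hd2 : 0 < 2 * L / delta) by (apply Rdiv_lt_0_compat; lra).
  assert (HeK : 0 < exp K0) by apply exp_pos.
  exists (2 * L + 1 + 2 * L / d + b * (2 * L / delta) + b * exp K0).
  intros x Hx.
  assert (Hx1 : 2 * L + 1 <= x) by nra.
  assert (Hx2 : 2 * L / d < x) by nra.
  assert (Hx3 : b * (2 * L / delta) < x) by nra.
  assert (Hx4 : b * exp K0 < x) by nra.
  assert (Hxpos : 0 < x) by lra.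
  destruct (Hmin (ln x)) as [H1 | [n Hn]].
  -
    exists (h (ln x)), 0. split; [lra|].
    intros t Ht. apply Rabs_le_between' in Ht.
    assert (Hl : Rabs (ln t - ln x) < d).
    { apply Rle_lt_trans with (Rabs (t - x) / (x - L)).
      apply ln_diff; lra.
      apply Rle_lt_trans with (L / (x - L)).
      { unfold Rdiv. apply Rmult_le_compat_r. left; apply Rinv_0_lt_compat; lra.
        apply Rabs_le_between'; lra. }
      apply Rmult_lt_reg_r with (x - L). lra.
      unfold Rdiv. rewrite Rmult_assoc, Rinv_l by lra.
      assert (2 * L * / d * d = 2 * L) by (field; lra). nra. }
    assert (Hu := Hunif _ _ Hl). apply Rabs_lt_between' in Hu.
    split; intros; nra.
  -
    set (B := exp (IZR n * ln b)) in *.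
    assert (HB : 0 < B) by apply exp_pos.
    rewrite exp_minus_div, exp_ln in Hn by lra. fold B in Hn.
    assert (HxB : x / B < b) by (apply Rabs_lt_between' in Hn; lra).
    assert (HBx : x < b * B) by (apply (Rmult_lt_compat_r B) in HxB; [|lra];
        unfold Rdiv in HxB; rewrite Rmult_assoc, Rinv_l, Rmult_1_r in HxB; lra).
    assert (HB1 : 2 * L / delta < B) by nra.
    assert (HB2 : exp K0 < B) by nra.
    set (K := IZR n * ln b) in *.
    assert (HKB : ln B = K) by (unfold B; apply ln_exp).
    assert (HK : K0 < K) by (rewrite <- HKB, <- (ln_exp K0); apply ln_increasing; lra).
    assert (HLB : L / B < delta / 2).
    { apply Rmult_lt_reg_r with B; auto. unfold Rdiv. rewrite Rmult_assoc, Rinv_l by lra.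
      assert (delta * / 2 * B > delta * / 2 * (2 * L / delta)) by (apply Rmult_lt_compat_l; lra).
      assert (E : delta * / 2 * (2 * L / delta) = L) by (field; lra). lra. }
    set (z := x0 * B).
    assert (Hwin : forall t, Rabs (t - x) <= L ->
               0 < t /\ Rabs (t / B - x0) < delta /\ (t <> z -> 0 < Rabs (t - z) /\ ln (Rabs (t - z)) < K - lam)).
    { intros t Ht. apply Rabs_le_between' in Ht.
      assert (Htd : Rabs (t / B - x0) < delta).
      { replace (t / B - x0) with ((x / B - x0) + (t - x) / B) by (field; lra).
        apply Rle_lt_trans with (Rabs (x / B - x0) + Rabs ((t - x) / B)). apply Rabs_triang.
        rewrite Rabs_div, (Rabs_right B) by lra.
        assert (Rabs (t - x) / B <= L / B).
        { unfold Rdiv. apply Rmult_le_compat_r. left; apply Rinv_0_lt_compat; lra.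
          apply Rabs_le_between'; lra. }
        lra. }
      split; [lra|]. split; [auto|]. intros Hne.
      assert (Hu : 0 < Rabs (t - z)) by (apply Rabs_pos_lt; lra).
      split; auto.
      assert (Ez : Rabs (t - z) = B * Rabs (t / B - x0)).
      { replace (t - z) with (B * (t / B - x0)) by (unfold z; field; lra).
        rewrite Rabs_mult, Rabs_right by lra. reflexivity. }
      assert (Rabs (t - z) < delta * B) by (rewrite Ez; nra).
      apply Rlt_le_trans with (ln (delta * B)).
      apply ln_increasing; auto. rewrite ln_mult by lra. rewrite HKB. unfold lam; lra. }
    assert (Hnear : forall t, Rabs (t - x) <= L -> t <> z -> h (ln t) = / (K - ln (Rabs (t - z)))).
    { intros t Ht Hne. destruct (Hwin t Ht) as [Ht0 [Htd _]].
      apply (h_near h x0 b delta Hx0 Hb Hper Hloc n t Ht0 Htd Hne). }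
    assert (Hz0 : h (ln z) = 0).
    { unfold z. rewrite ln_mult by lra. rewrite HKB. unfold K. rewrite hper_Z by exact Hper. exact Hzero. }
    destruct (Rle_dec (Rabs (x - z)) R0) as [Ha|Ha].
    +
      assert (HK0 : 1 <= K0) by (unfold K0; lra).
      exists (/ K), z. split. { apply Rinv_0_lt_compat; lra. }
      intros t Ht.
      destruct (Req_dec t z) as [Etz|Etz].
      * subst t. rewrite Hz0. split.
        -- assert (0 < / K) by (apply Rinv_0_lt_compat; lra). nra.
        -- intros Hc. rewrite Rminus_diag, Rabs_R0 in Hc. lra.
      * destruct (Hwin t Ht) as [_ [_ Hw]]. destruct (Hw Etz) as [Hu Hlu].
        rewrite (Hnear t Ht Etz).
        assert (HD : 0 < K - ln (Rabs (t - z))) by lra.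
        assert (Hut : Rabs (t - z) <= R0 + L).
        { replace (t - z) with ((x - z) + (t - x)) by ring.
          apply Rle_trans with (Rabs (x - z) + Rabs (t - x)). apply Rabs_triang. lra. }
        assert (Hlut : ln (Rabs (t - z)) <= ln (R0 + L)) by (apply ln_le; lra).
        split.
        -- rewrite Rmult_comm. apply inv_le1; try lra.
           assert (HKK : (1 + eta) * ln (R0 + L) <= eta * K).
           { assert (eta * K0 >= (1 + eta) * ln (R0 + L)).
             { unfold K0. assert (E : eta * ((1 + eta) * ln (R0 + L) / eta) = (1 + eta) * ln (R0 + L)) by (field; lra).
               assert (eta * (- ln th / eta) = - ln th) by (field; lra). nra. }
             nra. }
           destruct (Rle_dec 0 (ln (Rabs (t - z)))); nra.
        -- intros Hthu. rewrite Rmult_comm. apply inv_le2; try lra.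
           assert (Hlt : ln th <= ln (Rabs (t - z))) by (apply ln_le; lra).
           assert (eta * K0 >= - ln th).
           { unfold K0. assert (E : eta * ((1 + eta) * ln (R0 + L) / eta) = (1 + eta) * ln (R0 + L)) by (field; lra).
             assert (eta * (- ln th / eta) = - ln th) by (field; lra). nra. }
           nra.
    +
      apply Rnot_le_lt in Ha.
      assert (Hxz : x <> z) by (intro E; rewrite E, Rminus_diag, Rabs_R0 in Ha; unfold R0 in Ha; lra).
      assert (Hx0w : Rabs (x - x) <= L) by (rewrite Rminus_diag, Rabs_R0; lra).
      destruct (Hwin x Hx0w) as [_ [_ Hw0]]. destruct (Hw0 Hxz) as [Hu0 Hlu0].
      set (D0 := K - ln (Rabs (x - z))).
      assert (HD0 : lam < D0) by (unfold D0; lra).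
      exists (/ D0), 0. split. { apply Rinv_0_lt_compat; lra. }
      intros t Ht.
      assert (Hut : Rabs (x - z) / 2 <= Rabs (t - z)).
      { replace (x - z) with ((t - z) - (t - x)) in Ha |- * by ring.
        assert (Hq := Rabs_triang (t - z) (- (t - x))). rewrite Rabs_Ropp in Hq.
        replace ((t - z) + - (t - x)) with ((t - z) - (t - x)) in Hq by ring.
        unfold R0 in Ha. lra. }
      assert (Etz : t <> z) by (intro E; rewrite E, Rminus_diag, Rabs_R0 in Hut; lra).
      destruct (Hwin t Ht) as [_ [_ Hw]]. destruct (Hw Etz) as [Hu Hlu].
      rewrite (Hnear t Ht Etz).
      set (D := K - ln (Rabs (t - z))).
      assert (HDl : lam < D) by (unfold D; lra).
      assert (Hdiff : Rabs (D - D0) <= eta * lam).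
      { unfold D, D0. replace (K - ln (Rabs (t - z)) - (K - ln (Rabs (x - z)))) with
          (- (ln (Rabs (t - z)) - ln (Rabs (x - z)))) by ring. rewrite Rabs_Ropp.
        apply Rle_trans with (Rabs (Rabs (t - z) - Rabs (x - z)) / (Rabs (x - z) / 2)).
        apply ln_diff; lra.
        apply Rle_trans with (2 * L / R0); [|exact HR2].
        assert (Hq : Rabs (Rabs (t - z) - Rabs (x - z)) <= L).
        { apply Rle_trans with (Rabs ((t - z) - (x - z))). apply Rabs_triang_inv2.
          replace ((t - z) - (x - z)) with (t - x) by ring. auto. }
        replace (Rabs (Rabs (t - z) - Rabs (x - z)) / (Rabs (x - z) / 2)) with
          (2 * Rabs (Rabs (t - z) - Rabs (x - z)) / Rabs (x - z)) by (field; lra).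
        unfold Rdiv. apply Rmult_le_compat. apply Rmult_le_pos; [lra|apply Rabs_pos]. left; apply Rinv_0_lt_compat; lra. lra.
        apply Rinv_le_contravar; unfold R0 in *; lra. }
      assert (Hq := inv_le3 D D0 lam eta Hlam ltac:(lra) ltac:(lra) ltac:(lra) Hdiff).
      apply Rabs_le_between' in Hq.
      split; intros; nra.
Qed.

Lemma pfactor alpha : alpha > 0 -> forall eta L, 0 < eta < 1 -> 0 < L ->
  exists X, 0 < X /\ forall x t, X <= x -> Rabs (t - x) <= L ->
    exp ((- alpha - 1) * ln x) * (1 - eta) <= exp ((- alpha - 1) * ln t) <=
    exp ((- alpha - 1) * ln x) * (1 + eta).
Proof.
  intros Ha eta L He HL.
  exists (2 * L + 4 * L * (alpha + 1) / eta + 1). split.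
  { assert (0 < 4 * L * (alpha + 1) / eta) by (apply Rdiv_lt_0_compat; nra). lra. }
  intros x t Hx Ht.
  assert (H0 : 0 < 4 * L * (alpha + 1) / eta) by (apply Rdiv_lt_0_compat; nra).
  apply Rabs_le_between' in Ht.
  assert (Hl : Rabs (ln t - ln x) <= L / (x - L)).
  { apply Rle_trans with (Rabs (t - x) / (x - L)). apply ln_diff; lra.
    unfold Rdiv. apply Rmult_le_compat_r. left; apply Rinv_0_lt_compat; lra.
    apply Rabs_le_between'; lra. }
  assert (Hl2 : (alpha + 1) * (L / (x - L)) <= eta / 2).
  { assert (E : 4 * L * (alpha + 1) / eta * eta = 4 * L * (alpha + 1)) by (field; lra).
    assert (E2 : L / (x - L) * (x - L) = L) by (field; lra).
    assert (0 < L / (x - L)) by (apply Rdiv_lt_0_compat; lra).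
    nra. }
  set (y := (- alpha - 1) * (ln t - ln x)).
  assert (Hy : Rabs y <= eta / 2).
  { unfold y. rewrite Rabs_mult. rewrite Rabs_left by lra.
    apply Rle_trans with ((alpha + 1) * (L / (x - L))); [|lra].
    replace (- (- alpha - 1)) with (alpha + 1) by ring.
    apply Rmult_le_compat_l; lra. }
  assert (Hy' : - (eta / 2) <= y <= eta / 2) by (unfold Rabs in Hy; destruct (Rcase_abs y); lra). clear Hy.
  assert (E : exp ((- alpha - 1) * ln t) = exp ((- alpha - 1) * ln x) * exp y).
  { rewrite <- exp_plus. f_equal. unfold y; ring. }
  rewrite E.
  assert (Hex := exp_pos ((- alpha - 1) * ln x)).
  assert (H1 := exp_ineq1_le y). assert (H2 := exp_ineq1_le (- y)).
  assert (H3 : exp y * exp (- y) = 1) by (rewrite <- exp_plus; replace (y + - y) with 0 by ring; apply exp_0).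
  assert (Hey := exp_pos y).
  split.
  - apply Rmult_le_compat_l; lra.
  - apply Rmult_le_compat_l; [lra|]. nra.
Qed.

Lemma phi_nonneg alpha x0 b (h : R -> R) (Hx0 : 1 < x0) (Hb : x0 < b)
  (Hper : forall t, h (t + ln b) = h t)
  (Hpos : forall x, 1 <= x <= b -> x <> x0 -> h (ln x) > 0)
  (Hzero : h (ln x0) = 0) : forall t, 0 <= phi alpha h t.
Proof.
  intros t. unfold phi. destruct (Rle_dec 1 t); [|lra].
  apply Rmult_le_pos. unfold Rpower; left; apply exp_pos.
  apply (h_nonneg h x0 b); auto.
Qed.

Lemma core (x0 b delta alpha : R) (h : R -> R)
  (Hx0 : 1 < x0) (Hb : x0 < b)
  (Hdelta0 : 0 < delta) (Hdelta1 : delta < 1)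
  (Hdelta2 : delta < x0 - 1) (Hdelta3 : delta < b - x0)
  (Hcont : continuity h)
  (Hper : forall t, h (t + ln b) = h t)
  (Hpos : forall x, 1 <= x <= b -> x <> x0 -> h (ln x) > 0)
  (Hzero : h (ln x0) = 0)
  (Hloc : forall x, 0 < Rabs (x - x0) < delta -> h (ln x) = - / ln (Rabs (x - x0)))
  (Halpha : alpha > 0) :
  forall c a eta, 0 < c -> 0 < eta <= 1/6 ->
  exists X, forall x, X <= x -> exists Q, 0 < Q /\
    (Q * (1 - eta) ^ 3 <= integral (phi alpha h) x (x + c) <= Q * (1 + eta) ^ 2) /\
    (Q * (1 - eta) ^ 3 <= integral (phi alpha h) (x + a) (x + a + c) <= Q * (1 + eta) ^ 2).
Proof.
  intros c a eta Hc Heta.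
  set (L := Rabs a + c).
  assert (HL : 0 < L) by (unfold L; assert (Hq := Rabs_pos a); lra).
  set (th := Rmin (c * eta / 2) (1 / 2)).
  assert (Hth : 0 < th < 1) by (unfold th; unfold Rmin; destruct Rle_dec; nra).
  assert (Hth2 : 2 * th <= c * eta) by (unfold th; assert (Hq := Rmin_l (c * eta / 2) (1/2)); lra).
  destruct (shape x0 b delta h Hx0 Hb Hdelta0 Hdelta1 Hdelta2 Hdelta3 Hcont Hper Hpos Hzero Hloc
              eta L th ltac:(lra) HL Hth) as [X1 HX1].
  destruct (pfactor alpha Halpha eta L ltac:(lra) HL) as [X2 [HX2 HP]].
  exists (Rmax (Rmax X1 X2) (L + 2)). intros x Hx.
  assert (Hm1 := Rmax_l (Rmax X1 X2) (L + 2)). assert (Hm2 := Rmax_r (Rmax X1 X2) (L + 2)).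
  assert (Hm3 := Rmax_l X1 X2). assert (Hm4 := Rmax_r X1 X2).
  destruct (HX1 x ltac:(lra)) as [A [e [HA Hsh]]].
  set (Px := exp ((- alpha - 1) * ln x)).
  assert (HPx : 0 < Px) by apply exp_pos.
  exists (A * Px * c). split. { apply Rmult_lt_0_compat; [apply Rmult_lt_0_compat|]; lra. }
  assert (Wi : forall u, (forall t, u <= t <= u + c -> Rabs (t - x) <= L) ->
     A * Px * c * (1 - eta) ^ 3 <= integral (phi alpha h) u (u + c) <= A * Px * c * (1 + eta) ^ 2).
  { intros u Hu.
    assert (Hphi : forall t, u <= t <= u + c -> phi alpha h t = exp ((- alpha - 1) * ln t) * h (ln t)).
    { intros t Ht. assert (Ht' := Hu t Ht). apply Rabs_le_between' in Ht'.
      unfold phi. destruct (Rle_dec 1 t) as [_|Hn]; [reflexivity|lra]. }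
    assert (Hnn := h_nonneg h x0 b Hx0 Hb Hper Hpos Hzero).
    assert (IB := int_bounds (phi alpha h) u (u + c) e th (A * Px * (1 + eta) ^ 2) (A * Px * (1 - eta) ^ 2)).
    destruct IB as [IB1 IB2].
    - lra.
    - apply Rmult_le_pos; [nra|]. apply pow_le; lra.
    - lra.
    - intros t Ht. apply phi_cont; auto. assert (Ht' := Hu t Ht). apply Rabs_le_between' in Ht'. lra.
    - intros t Ht. rewrite (Hphi t Ht). assert (Ht' := Hu t Ht).
      destruct (HP x t ltac:(lra) Ht') as [P1 P2]. destruct (Hsh t Ht') as [S1 _].
      assert (Hh := Hnn (ln t)). assert (Het := exp_pos ((- alpha - 1) * ln t)).
      split; [nra|].
      fold Px in P1, P2.
      apply Rle_trans with (Px * (1 + eta) * (A * (1 + eta))).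
      apply Rmult_le_compat; lra. nra.
    - intros t Ht Hte. rewrite (Hphi t Ht). assert (Ht' := Hu t Ht).
      destruct (HP x t ltac:(lra) Ht') as [P1 P2]. destruct (Hsh t Ht') as [_ S2].
      specialize (S2 Hte). fold Px in P1, P2.
      apply Rle_trans with (Px * (1 - eta) * (A * (1 - eta))).
      nra. apply Rmult_le_compat; try nra.
    - split.
      + apply Rle_trans with (A * Px * (1 - eta) ^ 2 * (u + c - u - 2 * th)); [|exact IB1].
        replace (u + c - u - 2 * th) with (c - 2 * th) by ring.
        assert (0 <= A * Px * (1 - eta) ^ 2) by (apply Rmult_le_pos; [nra|apply pow_le; lra]).
        assert (c * (1 - eta) <= c - 2 * th) by lra.
        replace (A * Px * c * (1 - eta) ^ 3) with (A * Px * (1 - eta) ^ 2 * (c * (1 - eta))) by ring.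
        apply Rmult_le_compat_l; lra.
      + replace (A * Px * c * (1 + eta) ^ 2) with (A * Px * (1 + eta) ^ 2 * (u + c - u)) by ring.
        exact IB2. }
  split.
  - apply Wi. intros t Ht. apply Rabs_le_between'. assert (Hq := Rabs_pos a). unfold L. lra.
  - apply Wi. intros t Ht. apply Rabs_le_between'. unfold L.
    assert (Hq := Rle_abs a). assert (Hq2 := Rle_abs (- a)). rewrite Rabs_Ropp in Hq2. lra.
Qed.

Lemma ratio_arith Q eta I1 I2 : 0 < Q -> 0 < eta <= 1/6 ->
  Q * (1 - eta) ^ 3 <= I1 <= Q * (1 + eta) ^ 2 ->
  Q * (1 - eta) ^ 3 <= I2 <= Q * (1 + eta) ^ 2 ->
  Rabs (I2 / I1 - 1) <= 12 * eta.
Proof.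
  intros HQ He H1 H2.
  assert (Hlo : Q / 2 <= Q * (1 - eta) ^ 3).
  { assert (1 / 2 <= (1 - eta) ^ 3) by (simpl; nra). nra. }
  assert (Hd : (1 + eta) ^ 2 - (1 - eta) ^ 3 <= 6 * eta) by (simpl; nra).
  assert (HI1 : 0 < I1) by lra.
  replace (I2 / I1 - 1) with ((I2 - I1) / I1) by (field; lra).
  rewrite Rabs_div by lra. rewrite (Rabs_right I1) by lra.
  assert (Hn : Rabs (I2 - I1) <= Q * (6 * eta)).
  { apply Rabs_le_between'. split; nra. }
  apply Rmult_le_reg_r with I1; auto. unfold Rdiv. rewrite Rmult_assoc, Rinv_l, Rmult_1_r by lra.
  nra.
Qed.

Theorem lemma3p1
  (x0 b delta alpha M : R) (h : R -> R)
  (Hx0 : 1 < x0) (Hb : x0 < b)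
  (Hdelta0 : 0 < delta) (Hdelta1 : delta < 1)
  (Hdelta2 : delta < x0 - 1) (Hdelta3 : delta < b - x0)
  (Hcont : continuity h)
  (Hper : forall t, h (t + ln b) = h t)
  (Hpos : forall x, 1 <= x <= b -> x <> x0 -> h (ln x) > 0)
  (Hzero : h (ln x0) = 0)
  (Hloc : forall x, 0 < Rabs (x - x0) < delta -> h (ln x) = - / ln (Rabs (x - x0)))
  (Halpha : alpha > 0)
  (HM : forall eps, eps > 0 -> exists T0, forall T, T0 <= T ->
          Rabs (integral (phi alpha h) 1 T - M) < eps) :
  L_loc (mu_interval alpha M h).
Proof.
  assert (Core := core x0 b delta alpha h Hx0 Hb Hdelta0 Hdelta1 Hdelta2 Hdelta3 Hcont Hper Hpos Hzero Hloc Halpha).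
  assert (Hnn := phi_nonneg alpha x0 b h Hx0 Hb Hper Hpos Hzero).
  assert (HMpos : 0 < M).
  { destruct (Core 1 0 (1/6) ltac:(lra) ltac:(lra)) as [X HX].
    set (x := Rmax X 2).
    destruct (HX x (Rmax_l X 2)) as [Q [HQ [[I1 _] _]]].
    assert (Hx2 : 2 <= x) by apply Rmax_r.
    set (I0 := integral (phi alpha h) x (x + 1)) in *.
    assert (HI0 : 0 < I0) by (simpl in I1; nra).
    destruct (HM (I0 / 2) ltac:(lra)) as [T0 HT0].
    set (T := Rmax T0 (x + 1)).
    assert (HT := HT0 T (Rmax_l _ _)). assert (HT1 : x + 1 <= T) by apply Rmax_r.
    assert (Hex : forall u v, 1 <= u -> u <= v -> ex_RInt (phi alpha h) u v).
    { intros u v Hu Huv.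
      apply (ex_RInt_ext (fun y => exp ((- alpha - 1) * ln y) * h (ln y))).
      { intros y Hy. rewrite Rmin_left in Hy by lra. unfold phi.
        destruct (Rle_dec 1 y); [reflexivity|lra]. }
      apply (ex_RInt_continuous (V:=R_CompleteNormedModule)). intros z Hz.
      rewrite Rmin_left in Hz by lra.
      apply (continuous_mult (K:=R_AbsRing)).
      + apply continuous_exp_comp.
        apply (continuous_mult (K:=R_AbsRing) (fun _ => - alpha - 1) ln).
        * apply continuous_const.
        * apply continuous_ln; lra.
      + apply continuous_comp. apply continuous_ln; lra. apply cont_h_C; auto. }
    assert (Hge : I0 <= integral (phi alpha h) 1 T).
    { unfold I0. rewrite !integral_RInt by (apply Hex; lra).
      rewrite <- (RInt_Chasles (phi alpha h) 1 x T) by (apply Hex; lra).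
      rewrite <- (RInt_Chasles (phi alpha h) x (x + 1) T) by (apply Hex; lra).
      unfold plus; simpl.
      assert (0 <= RInt (phi alpha h) 1 x).
      { replace 0 with (RInt (fun _ => 0) 1 x) by (rewrite RInt_const; unfold scal; simpl; unfold mult; simpl; ring).
        apply RInt_le; try lra. apply ex_RInt_const. apply Hex; lra. intros; apply Hnn. }
      assert (0 <= RInt (phi alpha h) (x + 1) T).
      { replace 0 with (RInt (fun _ => 0) (x + 1) T) by (rewrite RInt_const; unfold scal; simpl; unfold mult; simpl; ring).
        apply RInt_le; try lra. apply ex_RInt_const. apply Hex; lra. intros; apply Hnn. }
      lra. }
    apply Rabs_lt_between' in HT. lra. }
  intros c Hc. split.
  - destruct (Core c 0 (1/6) Hc ltac:(lra)) as [X HX].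
    exists X. intros x Hx. destruct (HX x Hx) as [Q [HQ [[I1 _] _]]].
    unfold mu_interval. apply Rmult_lt_0_compat.
    apply Rinv_0_lt_compat; auto. simpl in I1; nra.
  - intros a eps Heps.
    set (eta := Rmin (1/6) (eps / 24)).
    assert (Heta : 0 < eta <= 1/6) by (unfold eta, Rmin; destruct Rle_dec; lra).
    assert (Heta2 : eta <= eps / 24) by apply Rmin_r.
    destruct (Core c a eta Hc Heta) as [X HX].
    exists X. intros x Hx. destruct (HX x Hx) as [Q [HQ [I1 I2]]].
    assert (Hr := ratio_arith Q eta _ _ HQ Heta I1 I2).
    unfold mu_interval.
    assert (HI : 0 < integral (phi alpha h) x (x + c)).
    { assert (0 < (1 - eta) ^ 3) by (apply pow_lt; lra). nra. }
    replace (/ M * integral (phi alpha h) (x + a) (x + a + c) / (/ M * integral (phi alpha h) x (x + c)))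
      with (integral (phi alpha h) (x + a) (x + a + c) / integral (phi alpha h) x (x + c))
      by (field; split; lra).
    lra.
Qed.
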